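(* For any $n\in\mathbb{N}$ and $A>0$, there exists $f\in C^1[-1,1]$ with $f\le0$ on $[-1,0]$ and $f\ge0$ on $[0,1]$, such that every algebraic polynomial $P_n$ of degree $\le n$ which satisfies $P_n\ge0$ on $(0,1/n)$ and $P_n^{(i)}(0)=f^{(i)}(0)$ for $i=0,1$ obeys $$\|f-P_n\|>A\,\omega_3(f',1).$$
   Context: $\|\cdot\|$ is the sup norm on $[-1,1]$; $\omega_3(g,t)$ is the third modulus of smoothness of $g$ on $[-1,1]$. *)

(* Defs.v *)
From HB Require Import structures.
From mathcomp Require Import all_boot all_order all_algebra.
From mathcomp Require Import all_classical all_reals all_analysis.
Set Implicit Arguments. Unset Strict Implicit. Unset Printing Implicit Defensive.
Import Order.TTheory GRing.Theory Num.Theory.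
Import numFieldNormedType.Exports.
Local Open Scope classical_set_scope.
Local Open Scope ring_scope.

Definition supnorm {R : realType} (g : R -> R) : R :=
  sup [set y : R | exists2 x : R, (-1 <= x <= 1) & y = `|g x|].

Definition omega3 {R : realType} (g : R -> R) (t : R) : R :=
  sup [set y : R | exists h x : R,
        [/\ 0 < h <= t, -1 <= x, x + 3 * h <= 1 &
            y = `|g (x + 3 * h) - 3 * g (x + 2 * h) + 3 * g (x + h) - g x|] ].

(* Main.v *)
Require Import Defs.
From HB Require Import structures.
From mathcomp Require Import all_boot all_order all_algebra.
From mathcomp Require Import all_classical all_reals all_analysis.
From mathcomp Require Import ring lra qpoly.
Import Order.TTheory GRing.Theory Num.Theory.
Import numFieldNormedType.Exports.
Local Open Scope ring_scope.

Section F.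
Variable R : realType.
Variable d : R.
Hypothesis d0 : 0 < d.
Definition rr : {poly R} := (d^+2)%:P + 'X^2.
Definition cc : {poly R} := 'X^3 - d *: 'X^2.
Definition ff (x : R) : R := cc.[x] + (d^+3 - d^+5 * (rr.[x])^-1).
Definition ffp (x : R) : R := (deriv cc).[x] + d^+5 * ((deriv rr).[x] * (rr.[x]^-1)^+2).

Lemma rrE x : rr.[x] = d^+2 + x^+2. Proof. by rewrite /rr !hornerE. Qed.
Lemma ccE x : cc.[x] = x^+3 - d * x^+2. Proof. by rewrite /cc !hornerE. Qed.
Lemma rrpE x : (deriv rr).[x] = 2 * x.
Proof. rewrite /rr derivD derivC derivXn !hornerE /=. ring. Qed.
Lemma ccpE x : (deriv cc).[x] = 3 * x^+2 - 2 * d * x.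
Proof. rewrite /cc derivB derivZ !derivXn !hornerE /=. ring. Qed.

Lemma rr_pos x : 0 < rr.[x].
Proof. rewrite rrE. by rewrite ltr_pwDl ?sqr_ge0 ?exprn_gt0. Qed.

Lemma ffE x : ff x = (x^+3 * (d^+2 + x^+2) - d * x^+4) / (d^+2 + x^+2).
Proof.
have := rr_pos x; rewrite rrE => h.
rewrite /ff ccE rrE. field. by rewrite gt_eqF.
Qed.

Definition gg (x : R) := d^+3 * x^+2 / (d^+2 + x^+2).
Lemma ffgE x : ff x = cc.[x] + gg x.
Proof.
have := rr_pos x; rewrite rrE => h.
rewrite /ff /gg rrE. congr (_ + _). field. by rewrite gt_eqF.
Qed.

Lemma gg_bnd x : 0 <= gg x <= d^+3.
Proof.
have := rr_pos x; rewrite rrE => h.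
apply/andP; split.
  apply: divr_ge0; last exact: ltW h.
  by apply: mulr_ge0; [apply: exprn_ge0; exact: ltW d0| exact: sqr_ge0].
rewrite /gg ler_pdivrMr //. rewrite -subr_ge0.
have -> : d ^+ 3 * (d ^+ 2 + x ^+ 2) - d ^+ 3 * x ^+ 2 = d^+5 by ring.
by rewrite exprn_ge0 // ltW.
Qed.

Definition gp (x : R) := 2 * d^+5 * x / (d^+2 + x^+2)^+2.
Lemma ffpE x : ffp x = 3 * x^+2 - 2 * d * x + gp x.
Proof.
have := rr_pos x; rewrite rrE => h.
rewrite /ffp /gp ccpE rrpE rrE. field. by rewrite gt_eqF.
Qed.

Lemma gp_bnd x : `|gp x| <= d^+2.
Proof.
have := rr_pos x; rewrite rrE => h.
have h2 : 0 < (d^+2 + x^+2)^+2 by rewrite exprn_gt0.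
rewrite ler_norml /gp; apply/andP; split.
  rewrite ler_pdivlMr //.
  have : 0 <= d^+2 * ((d+x)^+2 + x^+2) + x^+4.
    by apply: addr_ge0; [apply: mulr_ge0; [exact: sqr_ge0|apply: addr_ge0; exact: sqr_ge0]|by rewrite -[4%N]/(2*2)%N exprM sqr_ge0].
  move=> H; rewrite -subr_ge0.
  have -> : 2 * d ^+ 5 * x - - d ^+ 2 * (d ^+ 2 + x ^+ 2) ^+ 2 = d^+2 * (d ^+ 2 * ((d + x) ^+ 2 + x ^+ 2) + x ^+ 4) by ring.
  by rewrite mulr_ge0 ?sqr_ge0.
rewrite ler_pdivrMr //.
have : 0 <= d^+2 * ((d-x)^+2 + x^+2) + x^+4.
  by apply: addr_ge0; [apply: mulr_ge0; [exact: sqr_ge0|apply: addr_ge0; exact: sqr_ge0]|by rewrite -[4%N]/(2*2)%N exprM sqr_ge0].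
move=> H; rewrite -subr_ge0.
have -> : d ^+ 2 * (d ^+ 2 + x ^+ 2) ^+ 2 - 2 * d ^+ 5 * x = d^+2 * (d ^+ 2 * ((d - x) ^+ 2 + x ^+ 2) + x ^+ 4) by ring.
by rewrite mulr_ge0 ?sqr_ge0.
Qed.

Lemma ff_is_derive (x : R) : is_derive x (1:R) ff (ffp x).
Proof.
have h1 : is_derive x (1:R) (fun y => (rr.[y])^-1) (- (rr.[x]) ^- 2 *: (deriv rr).[x]).
  by apply: is_deriveV; first by rewrite gt_eqF ?rr_pos.
have h2 : is_derive x (1:R) (fun y => d^+5 * (rr.[y])^-1) (d^+5 *: (- (rr.[x]) ^- 2 *: (deriv rr).[x])).
  exact: is_deriveZ.
have h3 : is_derive x (1:R) (fun y => d^+3 - d^+5 * (rr.[y])^-1) (0 - (d^+5 *: (- (rr.[x]) ^- 2 *: (deriv rr).[x]))).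
  exact: is_deriveB.
have h4 := is_deriveD (is_derive_poly cc x) h3.
have -> : ff = (horner cc + (fun y => d^+3 - d^+5 * (rr.[y])^-1)) by apply/funext.
apply: (is_derive_eq h4).
rewrite /ffp -exprVn; rewrite /GRing.scale /=. ring.
Qed.

Lemma derive1_ffx x : derive1 ff x = ffp x.
Proof. rewrite derive1E. have [_ H] := ff_is_derive x. exact: H. Qed.
Lemma derive1_ff : derive1 ff = ffp.
Proof. apply/funext => x; exact: derive1_ffx. Qed.

Lemma ffp_cont : continuous ffp.
Proof.
move=> x; apply/differentiable_continuous/derivable1_diffP.

have e : ffp = (horner (deriv cc) + (fun y => d^+5 * ((deriv rr).[y] * (rr.[y]^-1)^+2))).
  apply/funext => y. reflexivity.
rewrite e. 
apply: derivableD.  exact: derivable_horner.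
have e2 : (fun y => d^+5 * ((deriv rr).[y] * (rr.[y]^-1)^+2)) = d^+5 *: (horner (deriv rr) * (fun y => rr.[y]^-1)^+2).
  apply/funext => y. rewrite /= exprfctE. reflexivity.
rewrite e2.
apply: derivableZ. apply: derivableM; first exact: derivable_horner.
apply: derivableX.
apply: derivableV; first by rewrite gt_eqF ?rr_pos.
exact: derivable_horner.
Qed.

Lemma ff_cont : continuous ff.
Proof.
move=> x; apply/differentiable_continuous/derivable1_diffP.
have [H _] := ff_is_derive x. exact: H.
Qed.

End F.
Arguments rr {R}.
Arguments cc {R}.
Arguments ff {R}.
Arguments ffp {R}.
Arguments gg {R}.
Arguments gp {R}.
Arguments rrE {R d}.
Arguments ccE {R d}.
Arguments rrpE {R d}.
Arguments ccpE {R d}.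
Arguments rr_pos {R d}.
Arguments ffE {R d}.
Arguments ffgE {R d}.
Arguments gg_bnd {R d}.
Arguments ffpE {R d}.
Arguments gp_bnd {R d}.
Arguments ff_is_derive {R d}.
Arguments derive1_ffx {R d}.
Arguments derive1_ff {R d}.
Arguments ffp_cont {R d}.
Arguments ff_cont {R d}.

Section SN.
Local Open Scope classical_set_scope.
Lemma supnorm_ge (R : realType) (h : R -> R) x :
  continuous h -> -1 <= x <= 1 -> `|h x| <= supnorm h.
Proof.
move=> hc hx.
have m1 : (-1 : R) <= 1 by lra.
have cont : {within `[-1, 1], continuous (fun t => `|h t|)}.
  apply: continuous_subspaceT => t.
  exact: (continuous_comp (hc t) (@norm_continuous _ _ (h t))).
have [c cI hcmax] := @EVT_max R (fun t => `|h t|) (-1) 1 m1 cont.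
rewrite /supnorm; apply: ub_le_sup.
- exists `|h c| => y [t ht ->]. apply: hcmax. by rewrite in_itv.
- by exists x.
Qed.

Lemma omega3_ffp (R : realType) (d : R) : 0 < d -> omega3 (ffp d) 1 <= 8 * d^+2.
Proof.
move=> d0; rewrite /omega3; apply: ge_sup.
  exists `|ffp d (-1 + 3 * 3^-1) - 3 * ffp d (-1 + 2 * 3^-1) + 3 * ffp d (-1 + 3^-1) - ffp d (-1)|.
  exists 3^-1, (-1); split => //.
  - rewrite invr_gt0 ltr0n /=. rewrite invf_le1 ?ltr0n //. by rewrite ler1n.
  - by rewrite mulfV // addNr.
move=> y [h [x [hh hx1 hx2 ->]]].
have -> : ffp d (x + 3 * h) - 3 * ffp d (x + 2 * h) + 3 * ffp d (x + h) - ffp d x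
   = gp d (x + 3 * h) - 3 * gp d (x + 2 * h) + 3 * gp d (x + h) - gp d x.
  rewrite !(ffpE d0). ring.
have := @gp_bnd R d d0 (x + 3 * h); have := @gp_bnd R d d0 (x + 2 * h).
have := @gp_bnd R d d0 (x + h); have := @gp_bnd R d d0 x.
set A1 := gp d x; set A2 := gp d (x + h); set A3 := gp d (x + 2 * h); set A4 := gp d (x + 3 * h); set D := d ^+ 2.
rewrite !ler_norml => /andP[a1 a2] /andP[b1 b2] /andP[c1 c2] /andP[e1 e2].
apply/andP; split; lra.
Qed.

Lemma coef2_ge0 (R : realType) (n : nat) (P : {poly R}) : (0 < n)%N ->
  P`_0 = 0 -> P`_1 = 0 -> (forall x : R, 0 < x < n%:R^-1 -> 0 <= P.[x]) ->
  0 <= P`_2.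
Proof.
move=> n0 c0 c1 Ppos.
set S := drop_poly 2 P.
have PE : forall x, P.[x] = x^+2 * S.[x].
  move=> x. rewrite -{1}(poly_take_drop 2 P).
  have -> : take_poly 2 P = 0.
    apply/polyP => i; rewrite coef_take_poly coef0.
    by case: i => [|[|i]] //=.
  by rewrite add0r hornerM hornerXn mulrC.
have S0 : S.[0] = P`_2 by rewrite horner_coef0 coef_drop_poly.
rewrite -S0.
have H : (fun z => S.[z]) @ (0:R)^'+ --> S.[0].
  apply: cvg_at_right_filter. exact: (@continuous_horner R S 0).
apply: (cvgr_to_ge H).
near=> x.
have x0 : 0 < x by near: x; exact: nbhs_right_gt.
have xn : x < n%:R^-1 by near: x; apply: nbhs_right_lt; rewrite invr_gt0 ltr0n.
have := Ppos x; rewrite x0 xn PE => /(_ isT).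
by rewrite pmulr_rge0 // exprn_gt0.
Unshelve. all: by end_near.
Qed.

End SN.

Theorem lemma3p10 (R : realType) (n : nat) (A : R) :
  (0 < n)%N -> 0 < A ->
  exists f : R -> R,
    [/\ (forall x : R, derivable f x 1),
        continuous (derive1 f),
        (forall x : R, -1 <= x <= 0 -> f x <= 0),
        (forall x : R, 0 <= x <= 1 -> 0 <= f x) &
        forall P : {poly R}, (size P <= n.+1)%N ->
          (forall x : R, 0 < x < n%:R^-1 -> 0 <= P.[x]) ->
          P.[0] = f 0 -> (deriv P).[0] = derive1 f 0 ->
          A * omega3 (derive1 f) 1 < supnorm (fun x => f x - P.[x])].
Proof.
move=> n0 A0.
pose N := n.+4.
pose xn := fun j : nat => - ((j%:R : R) / N%:R).
have N0 : (0 < N)%N by [].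
have NR : (0:R) < N%:R by rewrite ltr0n.
have Ninv : (N%:R : R)^-1 != 0 by rewrite invr_eq0 gt_eqF.
have xinj : injective xn.
  move=> i j; rewrite /xn => /oppr_inj /(mulIf Ninv) /eqP.
  by rewrite eqr_nat => /eqP.
pose L := fun i : 'I_N => (tnth (lagrange N xn) i : {poly R}).
pose K := \sum_(i < N) `|(L i)`_2|.
have K0 : 0 <= K by apply: sumr_ge0 => i _; exact: normr_ge0.
have KA : 0 <= K * (8 * A + 1) by apply: mulr_ge0 => //; lra.
pose d := (K * (8 * A + 1) + 1)^-1.
have D0 : 0 < K * (8 * A + 1) + 1 by lra.
have d0 : 0 < d by rewrite invr_gt0.
have d1 : d <= 1 by rewrite invf_le1 //; lra.
have dK : K * (8 * A + 1) * d = 1 - d.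
  rewrite /d; field; by rewrite gt_eqF.
exists (ff d); split.
- move=> x. have [H _] := ff_is_derive d0 x. exact: H.
- rewrite (derive1_ff d0). exact: ffp_cont d0.
- move=> x /andP[x1 x2]. rewrite (ffE d0).
  have s0 : 0 < d^+2 + x^+2 by rewrite -(rrE (d:=d)) rr_pos.
  rewrite ler_pdivrMr // mul0r.
  have h1 : x^+3 <= 0 by rewrite exprS; apply: mulr_le0_ge0 => //; exact: sqr_ge0.
  have h2 : x^+3 * (d^+2 + x^+2) <= 0 by apply: mulr_le0_ge0 => //; exact: ltW.
  have h3 : 0 <= d * x^+4 by apply: mulr_ge0; [exact: ltW|rewrite -[4%N]/(2*2)%N exprM sqr_ge0].
  lra.
- move=> x /andP[x1 x2]. rewrite (ffE d0).
  have s0 : 0 < d^+2 + x^+2 by rewrite -(rrE (d:=d)) rr_pos.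
  rewrite ler_pdivlMr // mul0r.
  have -> : x ^+ 3 * (d ^+ 2 + x ^+ 2) - d * x ^+ 4 = x^+3 * (((d - x)^+2 + d^+2 + x^+2) / 2) by field.
  apply: mulr_ge0; first exact: exprn_ge0.
  apply: divr_ge0; last lra.
  by rewrite !addr_ge0 ?sqr_ge0.
move=> P sP Ppos P0 P1.
have f0 : ff d 0 = 0.
  rewrite (ffE d0) !expr0n /=. rewrite !mul0r !mulr0 subrr. by rewrite mul0r.
have fp0 : derive1 (ff d) 0 = 0.
  rewrite (derive1_ffx d0) (ffpE d0) /gp !expr0n /= !mulr0 !mul0r. by rewrite subrr add0r.
have c0 : P`_0 = 0 by rewrite -horner_coef0 P0 f0.
have c1 : P`_1 = 0.
  by move: P1; rewrite fp0 horner_coef0 coef_deriv mulr1n.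
have c2 := @coef2_ge0 R n P n0 c0 c1 Ppos.
set M := supnorm (fun x => ff d x - P.[x]).
have hcont : continuous (fun x => ff d x - P.[x]).
  move=> x; apply: continuousB; [exact: (ff_cont d0 x) | exact: (@continuous_horner R P x)].
have Mge : forall x, -1 <= x <= 1 -> `|ff d x - P.[x]| <= M.
  move=> x hx; exact: (@supnorm_ge R (fun x => ff d x - P.[x]) x hcont hx).
pose q := P - cc d.
have scc : (size (cc d) <= 4)%N.
  rewrite /cc; apply: leq_trans (size_polyD _ _) _.
  rewrite size_polyN size_polyXn geq_max leqnn /=.
  by apply: leq_trans (size_scale_leq _ _) _; rewrite size_polyXn.
have sq : (size q <= N)%N.
  rewrite /q; apply: leq_trans (size_polyD _ _) _.
  rewrite size_polyN geq_max; apply/andP; split.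
    exact: (leq_trans sP (leq_addl 3 _)).
  by apply: leq_trans scc _.
have q2 : q`_2 = P`_2 + d.
  rewrite /q /cc coefB coefB coefZ !coefXn /=. ring.
have qL := lagrange_gen N0 xinj sq.
have q2E : q`_2 = \sum_(i < N) q.[xn i] * (L i)`_2.
  rewrite {1}qL coef_sum; apply: eq_bigr => i _; by rewrite coefCM.
have qb : forall i : 'I_N, `|q.[xn i]| <= M + d^+3.
  move=> i.
  have xi1 : -1 <= xn i <= 1.
    have h0 : 0 <= (i%:R : R) / N%:R by apply: divr_ge0; [exact: ler0n | exact: ltW].
    have h1 : (i%:R : R) / N%:R <= 1 by rewrite ler_pdivrMr // mul1r ler_nat ltnW.
    rewrite /xn; apply/andP; split; lra.
  have := Mge _ xi1.
  have := gg_bnd d0 (xn i).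
  have e : q.[xn i] = - (ff d (xn i) - P.[xn i]) + gg d (xn i).
    by rewrite /q hornerD hornerN (ffgE d0); ring.
  rewrite e.
  set a := ff d (xn i) - P.[xn i]; set b := gg d (xn i).
  move=> /andP[b0 b1] ha.
  apply: le_trans (ler_normD _ _) _.
  rewrite normrN; apply: lerD => //.
  by rewrite ger0_norm.
have key : d <= K * (M + d^+3).
  have : d <= q`_2 by rewrite q2; lra.
  move/le_trans; apply.
  rewrite q2E; apply: le_trans (ler_norm _) _.
  apply: le_trans (ler_norm_sum _ _ _) _.
  rewrite /K mulr_suml.
  apply: ler_sum => i _.
  rewrite normrM mulrC; apply: ler_wpM2l => //.
have om := @omega3_ffp R d d0.
rewrite (derive1_ff d0).
rewrite ltNge; apply/negP => hM.
have hM2 : M <= A * (8 * d^+2) by apply: le_trans hM _; apply: ler_wpM2l => //; exact: ltW.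
have k1 : K * (M + d^+3) <= K * (A * (8 * d^+2) + d^+3) by apply: ler_wpM2l => //; lra.
have k2 : K * (A * (8 * d^+2) + d^+3) <= d * (1 - d).
  rewrite -dK -subr_ge0.
  have -> : d * (K * (8 * A + 1) * d) - K * (A * (8 * d ^+ 2) + d ^+ 3) = K * d^+2 * (1 - d) by ring.
  apply: mulr_ge0; last lra.
  by apply: mulr_ge0 => //; exact: sqr_ge0.
have k3 : 0 < d * d by apply: mulr_gt0.
have : d <= d * (1 - d) by apply: le_trans key (le_trans k1 k2).
rewrite mulrBr mulr1. lra.
Qed.
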